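(* Let $m\ge2$, let $n\ge2$ be even, and $\epsilon\in\mathbb R$. Consider $2n$ parties on a ring (indices mod $2n$), each party $j$ holding values $M^{(j)}_0,\dots,M^{(j)}_{m-1}\in\{\pm1\}$. Define $$I^{(2n)}_{\mathrm{chain}}(\epsilon):=\sum_{j=0}^{2n-1}\big(1+(-1)^j\epsilon\big)\,I_{\mathrm{chain}}\big(M^{(j)},M^{(j+1)}\big).$$ Then $\min I^{(2n)}_{\mathrm{chain}}(\epsilon)=-4n(m-1)\max\{1,|\epsilon|\}$, the minimum being over all assignments of $\pm1$ values to all $M^{(j)}_k$.
   Context: For vectors $A=(A_0,\dots,A_{m-1})$, $B=(B_0,\dots,B_{m-1})\in\{\pm1\}^m$ the chained Bell expression is $I_{\mathrm{chain}}(A,B):=\sum_{i=0}^{m-1}\big(A_{m-i-2}B_i+A_{m-i-1}B_i\big)$, with the convention $A_{-1}:=-A_{m-1}$ (so for $m=2$ it is the CHSH expression $A_0B_0+A_0B_1+A_1B_0-A_1B_1$). In $I_{\mathrm{chain}}(M^{(j)},M^{(j+1)})$ party $j$ plays the role of $A$ and party $j+1$ the role of $B$. *)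

(* Defs.v *)
From HB Require Import structures.
From mathcomp Require Import all_boot all_order all_algebra.
Set Implicit Arguments. Unset Strict Implicit. Unset Printing Implicit Defensive.
Import Order.TTheory GRing.Theory Num.Theory.
Local Open Scope ring_scope.

(* Chained Bell expression with m settings:
   sum_{i<m} (A_{m-i-2} B_i + A_{m-i-1} B_i), with A_{-1} := - A_{m-1}.
   The index m-i-2 equals -1 exactly when i = m-1, i.e. when ~~ (i.+2 <= m). *)
Definition Ichain (R : pzRingType) (m : nat) (A B : nat -> R) : R :=
  \sum_(i < m)
    ((if (i.+2 <= m)%N then A (m - i.+2)%N else - A m.-1) * B i
     + A (m - i.+1)%N * B i).

Definition Ichain2n (R : pzRingType) (n m : nat) (eps : R)
    (M : nat -> nat -> R) : R :=
  \sum_(j < 2 * n)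
    (1 + (-1) ^+ j * eps) * Ichain m (M j) (M ((j.+1) %% (2 * n))%N).

Definition pm1_assignment (R : pzRingType) (n m : nat) (M : nat -> nat -> R) :=
  forall j k, (j < 2 * n)%N -> (k < m)%N -> M j k = 1 \/ M j k = -1.

(* Main.v *)
Require Import Defs.
From HB Require Import structures.
From mathcomp Require Import all_boot all_order all_algebra.
From mathcomp Require Import zify ring lra.
Import Order.TTheory GRing.Theory Num.Theory.
Local Open Scope ring_scope.

Section Aux.
Variable R : realFieldType.

Definition pm (x : R) := x = 1 \/ x = -1.

Lemma normpm x : pm x -> `|x| = 1.
Proof. by case=> ->; rewrite ?normrN normr1. Qed.

Lemma sum_pm x y : pm x -> pm y -> `|x + y| + `|x - y| = 2.
Proof.
case=> ->; case=> ->.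
- rewrite subrr normr0 addr0 ger0_norm; lra.
- rewrite subrr normr0 add0r opprK ger0_norm; lra.
- rewrite addNr normr0 add0r -opprD normrN ger0_norm; lra.
- rewrite opprK addNr normr0 addr0 -opprD normrN ger0_norm; lra.
Qed.

Lemma tele (a : nat -> R) k : (forall j, (j <= k)%N -> pm (a j)) ->
  \sum_(j < k) `|a j + a j.+1| + `|a 0%N - a k| <= 2 * k%:R.
Proof.
elim: k => [|k IH] h.
  by rewrite big_ord0 subrr normr0 add0r mulr0.
rewrite big_ord_recr /=.
have IH' := IH (fun j hj => h j (leqW hj)).
have tri := ler_distD (a k) (a 0%N) (a k.+1).
have s2 := sum_pm _ _ (h k (leqnSn k)) (h k.+1 (leqnn _)).
rewrite -natr1. lra.
Qed.

Lemma Ichain_abs k (A B : nat -> R) :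
  (forall j, (j <= k)%N -> pm (A j)) -> (forall j, (j <= k)%N -> pm (B j)) ->
  `|Ichain k.+1 A B| <= 2 * k%:R.
Proof.
move=> hA hB; rewrite /Ichain big_ord_recr /= ltnn subnn.
apply: le_trans (ler_normD _ _) _.
apply: le_trans (lerD (ler_norm_sum _ _ _) (lexx _)) _.
rewrite -mulrDl normrM (normpm _ (hB k (leqnn _))) mulr1.
rewrite (eq_bigr (fun i : 'I_k => `|A (k - i.+1)%N + A (k - i.+1).+1|)); last first.
  move=> i _ /=.
  rewrite ltnS ltn_ord subSS subSS subnSK // -mulrDl normrM.
  by rewrite (normpm _ (hB i (leq_trans (ltnW (ltn_ord i)) (leqnn _)))) mulr1.
have hr : \sum_(i < k) `|A (k - i.+1)%N + A (k - i.+1).+1| = \sum_(i < k) `|A i + A i.+1|.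
  have := big_rev_mkord (@GRing.add R) 0 0 k xpredT (fun j => `|A j + A j.+1|).
  by rewrite subn0 big_mkord => ->.
rewrite hr.
have := tele _ _ hA.
have -> : `|- A k + A 0%N| = `|A 0%N - A k| by rewrite addrC.
by [].
Qed.

Lemma Ichain_const k (c d : R) :
  Ichain k.+1 (fun _ => c) (fun _ => d) = c * d * (2 * k%:R).
Proof.
rewrite /Ichain big_ord_recr /= ltnn.
rewrite (eq_bigr (fun _ => c * d + c * d)); last first.
  by move=> i _ /=; rewrite ltnS ltn_ord.
rewrite sumr_const card_ord -mulr_natr; ring.
Qed.

Lemma sum4 (f : nat -> R) q : (forall j, f (j + 4)%N = f j) ->
  \sum_(j < 4 * q) f j = (f 0%N + f 1%N + f 2%N + f 3%N) *+ q.
Proof.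
move=> hf.
have per : forall q r, f (4 * q + r)%N = f r.
  elim=> [|p IH] r; first by rewrite muln0 add0n.
  have -> : (4 * p.+1 + r = (4 * p + r) + 4)%N by lia.
  by rewrite hf IH.
elim: q => [|q IH]; first by rewrite muln0 big_ord0 mulr0n.
have -> : (4 * q.+1 = (4 * q).+4)%N by lia.
rewrite !big_ord_recr /= IH mulrSr.
have e1 := per q 0%N; have e2 := per q 1%N; have e3 := per q 2%N; have e4 := per q 3%N.
rewrite addn0 in e1; rewrite !addnS addn0 in e2 e3 e4.
rewrite e1 e2 e3 e4; ring.
Qed.

Lemma normsum_max (e : R) : `|1 + e| + `|1 - e| = 2 * Num.max 1 `|e|.
Proof.
have [h1|h1] := leP e 1; have [h2|h2] := leP (-1) e.
- have hN : `|e| <= 1 by rewrite ler_norml; apply/andP; split.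
  rewrite (max_l hN) (ger0_norm (_ : 0 <= 1 + e)) ?(ger0_norm (_ : 0 <= 1 - e)); lra.
- have hN : 1 <= `|e| by rewrite ltr0_norm; lra.
  rewrite (max_r hN) (ltr0_norm (_ : e < 0)) ?(ler0_norm (_ : 1 + e <= 0)) ?(ger0_norm (_ : 0 <= 1 - e)); lra.
- have hN : 1 <= `|e| by rewrite ger0_norm; lra.
  rewrite (max_r hN) (ger0_norm (_ : 0 <= e)) ?(ger0_norm (_ : 0 <= 1 + e)) ?(ler0_norm (_ : 1 - e <= 0)); lra.
- lra.
Qed.

End Aux.
Arguments pm {R}.
Arguments Ichain_const {R}.
Arguments Ichain_abs {R k A B}.
Arguments sum4 {R}.
Arguments normsum_max {R}.

Theorem mainTheorem9 (R : realFieldType) (m n : nat) (eps : R)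
    (hm : (2 <= m)%N) (hn : (2 <= n)%N) (hne : ~~ odd n) :
  (exists M : nat -> nat -> R, pm1_assignment n m M /\
     Ichain2n n m eps M = - (4 * n * (m - 1))%:R * Num.max 1 `|eps|) /\
  (forall M : nat -> nat -> R, pm1_assignment n m M ->
     - (4 * n * (m - 1))%:R * Num.max 1 `|eps| <= Ichain2n n m eps M).
Proof.
have [q hq] : exists q, n = (2 * q)%N.
  exists n./2; rewrite -{1}(odd_double_half n) (negbTE hne) add0n mul2n //.
have [k hk] : exists k, m = k.+1.
  by exists m.-1; rewrite prednK // ltnW.
subst n m.
have q0 : (0 < 4 * q)%N by lia.
have ek : (k.+1 - 1 = k)%N by rewrite subn1.
have e4 : (2 * (2 * q) = 4 * q)%N by rewrite mulnA.
rewrite ek.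
have p4 : (-1) ^+ 4 = 1 :> R by rewrite !exprS expr0; ring.
have gen : forall cf : nat -> R,
  Ichain2n (2 * q) k.+1 eps (fun j _ => cf (j %% 4)%N) =
  ((1 + eps) * (cf 0%N * cf 1%N) + (1 - eps) * (cf 1%N * cf 2%N)
   + (1 + eps) * (cf 2%N * cf 3%N) + (1 - eps) * (cf 3%N * cf 0%N)) *+ q
   * (2 * k%:R).
  move=> cf; rewrite /Ichain2n e4.
  rewrite (eq_bigr (fun j : 'I_(4*q) => (1 + (-1)^+j * eps) *
     (cf (j %% 4)%N * cf (j.+1 %% 4)%N) * (2 * k%:R))); last first.
    move=> j _ /=.
    rewrite (modn_dvdm _ (dvdn_mulr q (dvdnn 4))).
    rewrite (Ichain_const k (cf (j %% 4)%N) (cf (j.+1 %% 4)%N)); ring.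
  rewrite -mulr_suml (sum4 (fun j => (1 + (-1)^+j * eps) *
     (cf (j %% 4)%N * cf (j.+1 %% 4)%N))); last first.
    by move=> j /=; rewrite -addSn !modnDr exprD p4 mulr1.
  have m0 : (0 %% 4 = 0)%N by [].
  have m1 : (1 %% 4 = 1)%N by [].
  have m2 : (2 %% 4 = 2)%N by [].
  have m3 : (3 %% 4 = 3)%N by [].
  have m4 : (4 %% 4 = 0)%N by [].
  rewrite m0 m1 m2 m3 m4 !exprS !expr0; ring.
split.
- have [h1|h1] := leP eps 1; have [h2|h2] := leP (-1) eps.
  + have hN : `|eps| <= 1 by rewrite ler_norml; apply/andP; split.
    pose cf := fun r : nat => if odd r then -1 else 1 : R.
    exists (fun j _ => cf (j %% 4)%N); split.
      by move=> j i _ _; rewrite /cf; case: ifP => _; [right|left].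
    rewrite gen (max_l hN) /cf /= -mulr_natr !natrM; ring.
  + have hN : 1 <= `|eps| by rewrite ltr0_norm; lra.
    pose cf := fun r : nat => match r with 2 | 3 => -1 | _ => 1 end : R.
    exists (fun j _ => cf (j %% 4)%N); split.
      move=> j i _ _; rewrite /cf.
      by case: (j %% 4)%N => [|[|[|[|r]]]]; [left|left|right|right|left].
    rewrite gen (max_r hN) (ltr0_norm (_ : eps < 0)); last by lra.
    rewrite /cf /= -mulr_natr !natrM; ring.
  + have hN : 1 <= `|eps| by rewrite ger0_norm; lra.
    pose cf := fun r : nat => match r with 1 | 2 => -1 | _ => 1 end : R.
    exists (fun j _ => cf (j %% 4)%N); split.
      move=> j i _ _; rewrite /cf.
      by case: (j %% 4)%N => [|[|[|[|r]]]]; [left|right|right|left|left].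
    rewrite gen (max_r hN) (ger0_norm (_ : 0 <= eps)); last by lra.
    rewrite /cf /= -mulr_natr !natrM; ring.
  + have h3 : (0 : R) < 0 by have := lt_trans h1 h2; lra.
    by rewrite ltxx in h3.
- move=> M hM; rewrite /Ichain2n e4.
  have hsum : \sum_(j < 4 * q) `|1 + (-1)^+j * eps| =
      (2 * (2 * Num.max 1 `|eps|)) *+ q.
    rewrite (sum4 (fun j => `|1 + (-1)^+j * eps|)); last first.
      by move=> j /=; rewrite exprD p4 mulr1.
    rewrite -normsum_max !exprS !expr0 !mulr1 !mulN1r !opprK !mul1r.
    rewrite ?mulN1r; congr (_ *+ q); ring.
  apply: le_trans (_ : - (2 * k%:R) * \sum_(j < 4 * q) `|1 + (-1)^+j * eps| <= _).
    rewrite hsum -mulr_natr !natrM.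
    rewrite le_eqVlt; apply/orP; left; apply/eqP; ring.
  rewrite mulr_sumr; apply: ler_sum => j _.
  have pmA : forall i, (i <= k)%N -> pm (M j i).
    by move=> i hi; apply: hM; rewrite ?e4 ?ltn_ord.
  have pmB : forall i, (i <= k)%N -> pm (M ((j.+1) %% (4 * q))%N i).
    by move=> i hi; apply: hM; rewrite ?e4 ?ltn_pmod.
  have hI := Ichain_abs pmA pmB.
  set w := 1 + _ * eps.
  set I := Ichain _ _ _.
  have h : `|w * I| <= `|w| * (2 * k%:R).
    by rewrite normrM; apply: ler_wpM2l.
  move: h; rewrite ler_norml => /andP [h _].
  lra.
Qed.
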